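(* Every instance of the Balancing with Conflicts game with $n$ players and $m$ machines satisfies: - if $n\ge m$, it is $\left(2-\frac1m+\frac{m-1}{n},\,0\right)$-semi-smooth; - if $n<m$, it is $\left(1+\frac{2n-2}{m},\,0\right)$-semi-smooth. In both cases the witnessing mixed strategy has every player choose each machine with probability $\frac1m$.
   Context: An instance of the Balancing with Conflicts (BwC) game consists of: - players $N=\{1,\dots,n\}$; - machines $M=\{1,\dots,m\}$; - a simple undirected graph $G=(N,E)$. Each player chooses one machine, so a state is $\vec s\in M^n$. Let $X_k(\vec s)=\{i:s_i=k\}$ and $x_k(\vec s)=|X_k(\vec s)|$. For $X\subseteq N$, $e(X)$ is the number of edges of $G$ with both endpoints in $X$. For a player $i$, $e(\{i\},X)$ is the number of neighbours of $i$ in $X$. The cost of player $i$ with $s_i=k$ is $c_i(\vec s)=x_k(\vec s)+e(\{i\},X_k(\vec s))$. The social cost is $$c(\vec s)=\sum_ic_i(\vec s)=\sum_{k=1}^m\big(x_k(\vec s)^2+2e(X_k(\vec s))\big),$$ and $\vec s^*$ is a state minimizing $c$. A cost-minimization game is $(\lambda,\mu)$-semi-smooth if there exist probability distributions $\sigma_i$ over the strategies of each player $i$ such that for every state $\vec s$, $$\sum_{i\in N}\mathbf E_{s_i'\sim\sigma_i}[c_i(s_i',\vec s_{-i})]\le\lambda c(\vec s^* )+\mu c(\vec s).$$ *)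

(* Defs.v *)
From HB Require Import structures.
From mathcomp Require Import all_boot all_order all_algebra.
Set Implicit Arguments. Unset Strict Implicit. Unset Printing Implicit Defensive.
Import Order.TTheory GRing.Theory Num.Theory.

(* Players are 'I_n, machines are 'I_m; the conflict graph is a simple
   undirected graph given by a symmetric irreflexive relation e on 'I_n. *)
Definition simple_graph (n : nat) (e : rel 'I_n) : Prop :=
  symmetric e /\ irreflexive e.

Definition state (n m : nat) := {ffun 'I_n -> 'I_m}.

Definition load_set n m (s : state n m) (k : 'I_m) : {set 'I_n} :=
  [set j | s j == k].

Definition player_cost n m (e : rel 'I_n) (s : state n m) (i : 'I_n) : nat :=
  #|load_set s (s i)| + #|[set j in load_set s (s i) | e i j]|.

Definition social_cost n m (e : rel 'I_n) (s : state n m) : nat :=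
  \sum_(i < n) player_cost e s i.

Definition is_optimal n m (e : rel 'I_n) (s : state n m) : Prop :=
  forall t : state n m, (social_cost e s <= social_cost e t)%N.

Definition deviate n m (s : state n m) (i : 'I_n) (k : 'I_m) : state n m :=
  [ffun j => if j == i then k else s j].

(* (lambda, mu)-semi-smoothness witnessed by the mixed strategies sigma
   (sigma i k = probability that player i picks machine k). *)
Local Open Scope ring_scope.
Definition semi_smooth_with (R : realFieldType) n m (e : rel 'I_n)
    (sigma : 'I_n -> 'I_m -> R) (lambda mu : R) : Prop :=
  [/\ (forall i k, 0 <= sigma i k),
      (forall i, \sum_(k < m) sigma i k = 1) &
      forall sopt : state n m, is_optimal e sopt ->
      forall s : state n m,
        \sum_(i < n) \sum_(k < m) sigma i k * (player_cost e (deviate s i k) i)%:R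
          <= lambda * (social_cost e sopt)%:R + mu * (social_cost e s)%:R].

Definition uniform_strategy (R : realFieldType) (n m : nat) : 'I_n -> 'I_m -> R :=
  fun _ _ => (m%:R)^-1.

(* Main.v *)
Require Import Defs.
From HB Require Import structures.
From mathcomp Require Import all_boot all_order all_algebra.
Import Order.TTheory GRing.Theory Num.Theory.
From mathcomp Require Import ring lra.
Local Open Scope ring_scope.

Lemma key1 (R : realFieldType) (m n A B X minv ninv : R) :
  0 < m -> 0 < n -> m * minv = 1 -> n * ninv = 1 -> 1 <= m ->
  X <= n * m + 2*n^+2 - n + B - A -> n^+2 <= m*A -> 0 <= B ->
  minv * X <= (2 - minv + (m-1)*ninv)*(A+B).
Proof.
move=> m0 n0 hm hn m1 hX hA hB.
have mi0 : 0 <= minv.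
  rewrite leNgt; apply/negP => h.
  have : m * minv < 0 by rewrite pmulr_rlt0.
  by rewrite hm; lra.
have ni0 : 0 <= ninv by nra.
have mi1 : minv <= 1.
  have : 0 <= (m-1)*minv by apply: mulr_ge0 => //; lra.
  lra.
have h1 : minv * X <= minv * (n * m + 2*n^+2 - n + B - A) by apply: ler_wpM2l.
have h2 : n^+2 * minv <= A.
  by have := ler_wpM2l mi0 hA; rewrite [minv * (m * A)]mulrA (mulrC minv m) hm mul1r mulrC.
have h3 : (m-1)*ninv*(n^+2*minv) <= (m-1)*ninv*A.
  by apply: ler_wpM2l => //; apply: mulr_ge0 => //; lra.
have h3' : (m-1)*ninv*(n^+2*minv) = (m-1)*n * minv.
  by rewrite (_ : (m-1)*ninv*(n^+2*minv) = (m-1)*minv*n*(n*ninv)); [rewrite hn; ring | ring].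
have h4 : minv * B <= B by rewrite -[X in _ <= X]mul1r; apply: ler_wpM2r.
have h5 : 0 <= (m-1)*ninv*B by apply: mulr_ge0 => //; apply: mulr_ge0 => //; lra.
nra.
Qed.

Lemma key2 (R : realFieldType) (m n A B X minv : R) :
  0 < m -> 1 <= m -> 1 <= n -> m * minv = 1 ->
  X <= n * m + 2*n^+2 - n + B - A -> n <= A -> 0 <= B ->
  minv * X <= (1 + (2*n-2)*minv)*(A+B).
Proof.
move=> m0 m1 n1 hm hX hA hB.
have mi0 : 0 <= minv.
  rewrite leNgt; apply/negP => h.
  have : m * minv < 0 by rewrite pmulr_rlt0.
  by rewrite hm; lra.
have mi1 : minv <= 1.
  have : 0 <= (m-1)*minv by apply: mulr_ge0 => //; lra.
  lra.
have h1 : minv * X <= minv * (n * m + 2*n^+2 - n + B - A) by apply: ler_wpM2l.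
have h3 : (2*n-1)*minv*n <= (2*n-1)*minv*A.
  by apply: ler_wpM2l => //; apply: mulr_ge0 => //; lra.
have h4 : minv * B <= B by rewrite -[X in _ <= X]mul1r; apply: ler_wpM2r.
have h5 : 0 <= (2*n-2)*minv*B by apply: mulr_ge0 => //; apply: mulr_ge0 => //; lra.
nra.
Qed.

Lemma cs (R : realFieldType) m (x : 'I_m -> R) :
  (\sum_k x k)^+2 <= m%:R * \sum_k x k ^+ 2.
Proof.
have H : 0 <= \sum_(k < m) \sum_(l < m) (x k - x l)^+2.
  by apply: sumr_ge0 => k _; apply: sumr_ge0 => l _; exact: sqr_ge0.
have E : \sum_(k < m) \sum_(l < m) (x k - x l)^+2 =
   2 * (m%:R * \sum_k x k ^+ 2) - 2 * (\sum_k x k)^+2.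
  under eq_bigr => k _ do under eq_bigr => l _ do rewrite sqrrB.
  rewrite expr2 big_distrl /=.
  under [X in _ = _ - 2 * X]eq_bigr => k _ do rewrite big_distrr /=.
  under eq_bigr => k _ do rewrite big_split sumrB /=.
  rewrite big_split sumrB /= sumr_const card_ord.
  under eq_bigr => k _ do rewrite sumr_const card_ord.
  rewrite sumrMnl.
  under eq_bigr => k _ do rewrite sumrMnl.
  rewrite sumrMnl.
  set S := \sum_(k < m) x k ^+ 2.
  set P := \sum_(k < m) \sum_(i < m) x k * x i.
  rewrite !mulr_natl [S *+ m *+ 2]mulr2n; by rewrite addrAC.
move: H; rewrite E.
have -> : (\sum_k x k)^+2 = \sum_(k < m) \sum_(i < m) x k * x i.
  by rewrite expr2 big_distrl /=; apply: eq_bigr => k _; rewrite big_distrr.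
set S := \sum_(k < m) x k ^+ 2.
set P := \sum_(k < m) \sum_(i < m) x k * x i.
set T := m%:R * S.
lra.
Qed.
Local Close Scope ring_scope.

Lemma card_sumb (T : finType) (P : pred T) : #|[set x | P x]| = \sum_x (P x : nat).
Proof. by rewrite -sum1dep_card big_mkcond; apply: eq_bigr => x _; case: (P x). Qed.

Lemma cost_sum n m (e : rel 'I_n) (He : simple_graph e) (s : state n m) (i : 'I_n) :
  \sum_(k < m) player_cost e (deviate s i k) i =
  \sum_(j < n) (if j == i then m else 1) + \sum_(j < n) (e i j : nat).
Proof.
have Hd : forall k, player_cost e (deviate s i k) i =
   \sum_(j < n) ((j == i) || (s j == k)) + \sum_(j < n) ((j != i) && (s j == k) && e i j).
  move=> k; rewrite /player_cost /load_set !card_sumb.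
  have -> : deviate s i k i = k by rewrite /deviate ffunE eqxx.
  congr (_ + _); apply: eq_bigr => j _; rewrite ?inE /deviate ffunE.
    by case: (j == i); rewrite ?eqxx.
  case: (eqVneq j i) => [->|_] /=; last by [].
  by case: He => _ Hirr; rewrite Hirr andbF.
rewrite (eq_bigr _ (fun k _ => Hd k)) big_split /=.
congr (_ + _); rewrite exchange_big /=; apply: eq_bigr => j _.
  case: (eqVneq j i) => _ /=.
    by rewrite sum_nat_const card_ord muln1.
  rewrite (bigD1 (s j)) //= eqxx big1 // => k Hk; by rewrite eq_sym (negbTE Hk).
rewrite (bigD1 (s j)) //= eqxx andbT big1 ?addn0.
  by case: (eqVneq j i) => [->|] //=; case: He => _ ->.
by move=> k Hk; rewrite [s j == k]eq_sym (negbTE Hk) andbF.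
Qed.

Lemma soc_sum n m (e : rel 'I_n) (t : state n m) :
  social_cost e t = \sum_(i < n) \sum_(j < n) (t j == t i : nat) +
     \sum_(i < n) \sum_(j < n) ((t j == t i) && e i j : nat).
Proof.
rewrite /social_cost -big_split; apply: eq_bigr => i _.
by rewrite /player_cost /load_set !card_sumb; congr (_ + _); apply: eq_bigr => j _; rewrite !inE.
Qed.

Lemma edge_bound n m (e : rel 'I_n) (t : state n m) :
  (\sum_(i < n) \sum_(j < n) (e i j : nat) +  \sum_(i < n) \sum_(j < n) (t j == t i : nat)
   <= \sum_(i < n) \sum_(j < n) ((t j == t i) && e i j : nat) + n * n)%N.
Proof.
have -> : (n * n = \sum_(i < n) \sum_(j < n) 1)%N.
  by rewrite !sum_nat_const !card_ord muln1.
rewrite -!big_split /=; apply: leq_sum => i _; rewrite -!big_split /=.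
by apply: leq_sum => j _; case: (e i j); case: (t j == t i).
Qed.

Lemma A_ge_n n m (t : state n m) : (n <= \sum_(i < n) \sum_(j < n) (t j == t i : nat))%N.
Proof.
rewrite -[X in (X <= _)%N]card_ord -sum1_card.
apply: leq_sum => i _; rewrite (bigD1 i) //= eqxx; exact: leq_addr.
Qed.

Lemma A_sq n m (t : state n m) :
  \sum_(i < n) \sum_(j < n) (t j == t i : nat) =
  \sum_(k < m) (\sum_(i < n) (t i == k : nat)) * (\sum_(i < n) (t i == k : nat)).
Proof.
have -> : \sum_(k < m) (\sum_(i < n) (t i == k : nat)) * (\sum_(i < n) (t i == k : nat))
  = \sum_(k < m) \sum_(i < n) \sum_(j < n) ((t i == k : nat) * (t j == k : nat)).
  apply: eq_bigr => k _; rewrite big_distrl /=; apply: eq_bigr => i _.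
  by rewrite big_distrr.
rewrite [RHS]exchange_big /=; apply: eq_bigr => i _; rewrite [RHS]exchange_big /=.
apply: eq_bigr => j _; rewrite (bigD1 (t i)) //= eqxx mul1n big1 ?addn0.
  by rewrite eq_sym; case: (t j == t i).
by move=> k Hk; rewrite eq_sym (negbTE Hk).
Qed.

Lemma X_sum n m (t : state n m) : \sum_(k < m) \sum_(i < n) (t i == k : nat) = n.
Proof.
rewrite exchange_big /= -[X in _ = X]card_ord -sum1_card; apply: eq_bigr => i _.
rewrite (bigD1 (t i)) //= eqxx big1 // => k Hk; by rewrite eq_sym (negbTE Hk).
Qed.

Lemma T0_eq n m : (\sum_(i < n) \sum_(j < n) (if j == i then m else 1) + n = n * (m + n))%N.
Proof.
rewrite -[X in (_ + X)%N]card_ord -sum1_card -big_split /=.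
rewrite -[X in (_ = X * _)%N]card_ord -sum_nat_const; apply: eq_bigr => i _.
have h1 : (\sum_(j < n) (j == i : nat))%N = 1%N.
  by rewrite (bigD1 i) //= eqxx big1 // => j /negbTE ->.
transitivity (\sum_(j < n) (if j == i then m else 1) + \sum_(j < n) (j == i : nat))%N.
  by rewrite h1.
rewrite -big_split /=.
have -> : (\sum_(j < n) ((if j == i then m else 1) + (j == i))
   = \sum_(j < n) (1 + (j == i : nat) * m))%N.
  by apply: eq_bigr => j _; case: (j == i); rewrite ?addn1 ?add1n ?mul1n ?mul0n.
rewrite big_split /= sum_nat_const card_ord muln1 -big_distrl /=.
rewrite (bigD1 i) //= eqxx big1 ?addn0 ?mul1n; first by rewrite addnC.
by move=> j /negbTE ->.
Qed.

Local Open Scope ring_scope.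

Lemma lhs_eq (R : realFieldType) n m (e : rel 'I_n) (He : simple_graph e) (s : state n m) :
  \sum_(i < n) \sum_(k < m) @uniform_strategy R n m i k * (player_cost e (deviate s i k) i)%:R
  = (m%:R)^-1 * ((\sum_(i < n) \sum_(j < n) (if j == i then m else 1)) +
                 \sum_(i < n) \sum_(j < n) (e i j : nat))%:R.
Proof.
transitivity ((m%:R)^-1 * (\sum_(i < n) \sum_(k < m) player_cost e (deviate s i k) i)%:R : R).
  rewrite natr_sum mulr_sumr; apply: eq_bigr => i _.
  by rewrite natr_sum mulr_sumr.
congr (_ * _%:R); rewrite -big_split /=; apply: eq_bigr => i _.
exact: cost_sum.
Qed.

Lemma cs_nat (R : realFieldType) n m (t : state n m) :
  (n%:R)^+2 <= m%:R * (\sum_(i < n) \sum_(j < n) (t j == t i : nat))%:R :> R.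
Proof.
rewrite A_sq -{1}(X_sum _ _ t) natr_sum.
rewrite [X in _ <= _ * X]natr_sum.
under [X in _ <= _ * X]eq_bigr => k _ do rewrite natrM -expr2.
exact: cs.
Qed.

Theorem theorem4 (R : realFieldType) (n m : nat) (e : rel 'I_n)
    (He : simple_graph e) (Hm : (0 < m)%N) :
  ((m <= n)%N ->
     semi_smooth_with e (@uniform_strategy R n m)
       (2 - (m%:R)^-1 + (m%:R - 1) / n%:R) 0) /\
  ((n < m)%N ->
     semi_smooth_with e (@uniform_strategy R n m)
       (1 + (2 * n%:R - 2) / m%:R) 0).
Proof.
have m0 : (0 < m%:R :> R) by rewrite ltr0n.
have m1 : (1 <= m%:R :> R) by rewrite ler1n.
have mne : (m%:R != 0 :> R) by rewrite pnatr_eq0 -lt0n.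
have hm : m%:R * (m%:R)^-1 = 1 :> R by rewrite mulfV.
have b1 : forall i k, 0 <= @uniform_strategy R n m i k.
  by move=> i k; rewrite /uniform_strategy invr_ge0 ler0n.
have b2 : forall i, \sum_(k < m) @uniform_strategy R n m i k = 1.
  by move=> i; rewrite /uniform_strategy sumr_const card_ord -[(m%:R)^-1 *+ m]mulr_natr mulVf.
have core : forall sopt s : state n m,
   let A := (\sum_(i < n) \sum_(j < n) (sopt j == sopt i : nat))%:R : R in
   let B := (\sum_(i < n) \sum_(j < n) ((sopt j == sopt i) && e i j : nat))%:R : R in
   let X := ((\sum_(i < n) \sum_(j < n) (if j == i then m else 1)) +
                 \sum_(i < n) \sum_(j < n) (e i j : nat))%:R : R in
   [/\ X <= n%:R * m%:R + 2 * n%:R^+2 - n%:R + B - A, n%:R <= A, 0 <= B &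
       n%:R ^+ 2 <= m%:R * A].
  move=> sopt s A B X; split.
  - have h1 := T0_eq n m.
    have h2 := edge_bound _ _ e sopt.
    have h1' := congr1 (fun k : nat => k%:R : R) h1; rewrite /= natrD natrM natrD in h1'.
    have h2' : ((\sum_(i < n) \sum_(j < n) (e i j : nat) +
            \sum_(i < n) \sum_(j < n) (sopt j == sopt i : nat))%N%:R <=
            (\sum_(i < n) \sum_(j < n) ((sopt j == sopt i) && e i j : nat) + n * n)%N%:R :> R)
      by rewrite ler_nat.
    rewrite !natrD natrM in h2'.
    rewrite /X /A /B natrD -/A -/B; move: h1' h2'; rewrite -/A -/B.
    set T0 := (\sum_(i < n) \sum_(j < n) _)%:R. set D := (\sum_(i < n) \sum_(j < n) _)%:R.
    move=> h1' h2'. rewrite expr2. nra.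
  - by rewrite /A ler_nat A_ge_n.
  - by rewrite /B ler0n.
  - exact: cs_nat.
split=> Hn; split=> // sopt _ s; rewrite lhs_eq // mul0r addr0 soc_sum [X in _ <= _ * X]natrD.
  have n1 : (1 <= n)%N by apply: leq_trans Hn.
  have n0 : (0 < n%:R :> R) by rewrite ltr0n.
  have hn : n%:R * (n%:R)^-1 = 1 :> R by rewrite mulfV // pnatr_eq0 -lt0n.
  case: (core sopt s) => h1 h2 h3 h4.
  exact: (@key1 R _ _ _ _ _ _ _ m0 n0 hm hn m1 h1 h4 h3).
case: (posnP n) => [n0|n1].
  have z : forall F : 'I_n -> R, \sum_(i < n) F i = 0.
    by move=> F; apply: big1 => -[j hj] _; exfalso; move: hj; rewrite n0.
  have zn : forall F : 'I_n -> nat, (\sum_(i < n) F i = 0)%N.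
    by move=> F; apply: big1 => -[j hj] _; exfalso; move: hj; rewrite n0.
  by rewrite !zn addr0 !mulr0.
case: (core sopt s) => h1 h2 h3 h4.
have n1R : (1 <= n%:R :> R) by rewrite ler1n.
exact: (@key2 R _ _ _ _ _ _ m0 m1 n1R hm h1 h2 h3).
Qed.
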